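(* For every positive integer $k$, \[ \sum_{\lfloor k/2\rfloor<i+t\le k}B_{2t}\,2^{2t}\binom{2k+2}{2t,\;2i+1,\;2k-2t-2i+1}=(k+1)\left(2^{2k}-(-1)^k\binom{2k}{k}\right), \] where the sum ranges over all pairs of nonnegative integers $i,t$ with $\lfloor k/2\rfloor<i+t\le k$.
   Context: The Bernoulli numbers $B_m$ ($m\ge 0$) are defined by $\dfrac{x}{e^x-1}=\sum_{m=0}^\infty B_m\dfrac{x^m}{m!}$. The trinomial coefficient is $\binom{n}{r_1,r_2,r_3}=\dfrac{n!}{r_1!\,r_2!\,r_3!}$ for nonnegative integers $r_1+r_2+r_3=n$. *)

(* Defs.v *)
From mathcomp Require Import all_boot all_order all_algebra.
Set Implicit Arguments. Unset Strict Implicit. Unset Printing Implicit Defensive.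
Import Order.TTheory GRing.Theory Num.Theory.
Local Open Scope ring_scope.

(* bern_list m = [:: B_0; B_1; ...; B_m], using the recurrence
   B_0 = 1, B_m = - 1/(m+1) * sum_{j<m} C(m+1,j) B_j  (m >= 1),
   which is equivalent to x/(e^x-1) = sum B_m x^m/m!  (so B_1 = -1/2). *)
Fixpoint bern_list (m : nat) : seq rat :=
  match m with
  | 0%N => [:: 1]
  | m'.+1 =>
      let s := bern_list m' in
      rcons s (- (m'.+2%:R)^-1 *
                 \sum_(j < m'.+1) ('C(m'.+2, j))%:R * nth 0 s j)
  end.

Definition bernoulli (m : nat) : rat := nth 0 (bern_list m) m.

(* trinomial coefficient n!/(r1! r2! r3!) (used only when r1+r2+r3 = n) *)
Definition trinomial (n r1 r2 r3 : nat) : nat :=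
  (n`! %/ (r1`! * r2`! * r3`!))%N.

(* Main.v *)
Require Import Defs.
From mathcomp Require Import all_boot all_order all_algebra.
From mathcomp Require Import ring lra zify.
Import Order.TTheory GRing.Theory Num.Theory.
Local Open Scope ring_scope.
Lemma size_bern_list m : size (bern_list m) = m.+1.
Proof. by elim: m => //= m IH; rewrite size_rcons IH. Qed.

Lemma nth_bern_list m j : (j <= m)%N -> nth 0 (bern_list m) j = bernoulli j.
Proof.
elim: m => [|m IH]; first by rewrite leqn0 => /eqP ->.
rewrite leq_eqVlt => /orP[/eqP ->|]; first by [].
rewrite ltnS => hj /=; rewrite nth_rcons size_bern_list ltnS hj; exact: IH.
Qed.

Lemma bern_rec m : bernoulli m.+1 =
  - (m.+2%:R)^-1 * \sum_(j < m.+1) ('C(m.+2, j))%:R * bernoulli j.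
Proof.
rewrite /bernoulli /= nth_rcons size_bern_list ltnn eqxx.
congr (_ * _); apply: eq_bigr => j _; rewrite nth_bern_list //.
by rewrite -ltnS.
Qed.

Lemma bern_sum n : (1 < n)%N ->
  \sum_(j < n) ('C(n, j))%:R * bernoulli j = 0.
Proof.
case: n => [//|[//|m]] _.
rewrite big_ord_recr /= bern_rec.
set S := \sum_(_ < _) _.
rewrite binSn.
have h : (m.+2%:R : rat) != 0 by rewrite pnatr_eq0.
by rewrite mulrA mulrN mulfV // mulN1r subrr.
Qed.
Definition cg N (p q : {poly rat}) := 'X^N %| p - q.

Lemma cgP N (p q : {poly rat}) : reflect (forall n, (n < N)%N -> p`_n = q`_n) (cg N p q).
Proof.
apply: (iffP idP).
  move=> /dvdpP [r hr] n hn; apply/eqP; rewrite -subr_eq0 -coefB hr.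
  by rewrite coefMXn hn.
move=> h; apply/dvdpP; exists (drop_poly N (p - q)).
have ht : take_poly N (p - q) = 0.
  apply/polyP => i; rewrite coef_take_poly coef0 coefB.
  by case: ifP => // /h ->; rewrite subrr.
by rewrite -{1}(poly_take_drop N (p - q)) ht add0r.
Qed.

Lemma cg_le M N (p q : {poly rat}) : (M <= N)%N -> cg N p q -> cg M p q.
Proof.
move=> hMN /cgP h; apply/cgP => n hn; apply: h; exact: leq_trans hn hMN.
Qed.

Lemma cg_cancel N (G H : {poly rat}) : cg N.+1 (G * H) 0 -> H`_0 = 0 -> H`_1 != 0 -> cg N G 0.
Proof.
move=> hG h0 h1.
have hH : H = drop_poly 1 H * 'X.
  have ht : take_poly 1 H = 0.
    apply/polyP => i; rewrite coef_take_poly coef0; case: i => //.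
  by rewrite -{1}(poly_take_drop 1 H) ht add0r expr1.
move: hG; rewrite /cg !subr0 hH mulrA exprSr dvdp_mul2r ?polyX_eq0 //.
rewrite Gauss_dvdpl //; apply: coprimep_expl.
have -> : 'X = 'X - (0 : rat)%:P by rewrite subr0.
rewrite coprimep_sym coprimep_XsubC /root horner_coef0 coef_drop_poly add0n.
exact: h1.
Qed.

Definition sc (c : rat) (p : {poly rat}) := \poly_(i < size p) (c ^+ i * p`_i).

Lemma coef_sc c p i : (sc c p)`_i = c ^+ i * p`_i.
Proof.
rewrite coef_poly; case: ifP => // /negbT; rewrite -leqNgt => hi.
by rewrite nth_default // mulr0.
Qed.

Lemma sc_mul c p q : sc c (p * q) = sc c p * sc c q.
Proof.
apply/polyP => i; rewrite coef_sc !coefM mulr_sumr; apply: eq_bigr => j _.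
rewrite !coef_sc; have hj := ltn_ord j.
rewrite -{1}(subnKC (_ : (j <= i)%N)) ?exprD; last by rewrite -ltnS.
ring.
Qed.

Lemma sc_add c p q : sc c (p + q) = sc c p + sc c q.
Proof. by apply/polyP => i; rewrite coefD !coef_sc coefD mulrDr. Qed.

Lemma sc_opp c p : sc c (- p) = - sc c p.
Proof. by apply/polyP => i; rewrite coefN !coef_sc coefN mulrN. Qed.

Lemma sc_sub c p q : sc c (p - q) = sc c p - sc c q.
Proof. by rewrite sc_add sc_opp. Qed.

Lemma sc_1 c : sc c 1 = 1.
Proof.
by apply/polyP => i; rewrite coef_sc coef1; case: i => [|i]; rewrite ?mulr0 ?mulr1.
Qed.

Lemma sc_X c : sc c 'X = c%:P * 'X.
Proof.
apply/polyP => i; rewrite coef_sc coefCM coefX.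
by case: i => [|[|i]]; rewrite ?mulr0 ?mulr1 ?expr1.
Qed.

Lemma sc_sc a b p : sc a (sc b p) = sc (a * b) p.
Proof. by apply/polyP => i; rewrite !coef_sc exprMn mulrA. Qed.

Lemma sc_cg c N (p q : {poly rat}) : cg N p q -> cg N (sc c p) (sc c q).
Proof.
move=> /cgP h; apply/cgP => n hn; by rewrite !coef_sc h.
Qed.

Lemma fact_bin n j : (j <= n)%N ->
  (j`!%:R : rat)^-1 * ((n - j)`!%:R)^-1 = ('C(n, j))%:R * (n`!%:R)^-1.
Proof.
move=> hj; rewrite -(bin_fact hj) natrM natrM.
have h1 : (j`!%:R : rat) != 0 by rewrite pnatr_eq0 -lt0n fact_gt0.
have h2 : ((n - j)`!%:R : rat) != 0 by rewrite pnatr_eq0 -lt0n fact_gt0.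
have h3 : ('C(n, j)%:R : rat) != 0 by rewrite pnatr_eq0 -lt0n bin_gt0.
by field; rewrite h1 h2 h3.
Qed.

Definition Ep N (c : rat) : {poly rat} := \poly_(i < N) (c ^+ i / i`!%:R).
Definition Bp N : {poly rat} := \poly_(i < N) (bernoulli i / i`!%:R).

Lemma sc_E N c a : sc c (Ep N a) = Ep N (c * a).
Proof.
apply/polyP => i; rewrite coef_sc !coef_poly; case: ifP; rewrite ?mulr0 //.
by rewrite exprMn mulrA.
Qed.

Lemma E_mul N a b : cg N (Ep N a * Ep N b) (Ep N (a + b)).
Proof.
apply/cgP => n hn; rewrite coefM coef_poly hn addrC exprDn.
rewrite mulr_suml; apply: eq_bigr => j _.
have hj : (j <= n)%N by rewrite -ltnS.
have h1 : (j < N)%N by lia.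
have h2 : (n - j < N)%N by lia.
rewrite !coef_poly h1 h2.
have := fact_bin _ _ hj => h.
transitivity (a ^+ j * b ^+ (n - j) * ((j`!%:R)^-1 * ((n - j)`!%:R)^-1)).
  ring.
rewrite h -mulr_natr; ring.
Qed.

Lemma E0 N : cg N (Ep N 0) 1.
Proof.
apply/cgP => n hn; rewrite coef_poly hn coef1 expr0n.
by case: n hn => [|n] _ /=; rewrite ?invr1 ?mulr1 ?mul0r.
Qed.

Lemma B_rec N : cg N (Bp N * (Ep N 1 - 1)) 'X.
Proof.
apply/cgP => n hn; rewrite coefM big_ord_recr /= subnn coefB coef1 [(Bp N)`_n]coef_poly.
have h0 : (0 < N)%N by lia.
rewrite hn coef_poly h0 expr1n fact0 invr1 mulr1 subrr mulr0 addr0.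
have -> : \sum_(i < n) (Bp N)`_i * (Ep N 1 - 1)`_(n - i) =
    (n`!%:R)^-1 * \sum_(i < n) ('C(n, i))%:R * bernoulli i.
  rewrite mulr_sumr; apply: eq_bigr => i _.
  have hi : (i < n)%N := ltn_ord i.
  have h1 : (i < N)%N by lia.
  have h2 : (n - i < N)%N by lia.
  rewrite coefB coef1 !coef_poly h1 h2 expr1n.
  have -> : (n - i == 0)%N = false by apply/negbTE; rewrite subn_eq0 -ltnNge.
  rewrite subr0.
  transitivity (bernoulli i * ((i`!%:R)^-1 * ((n - i)`!%:R)^-1)); first ring.
  rewrite (fact_bin _ _ (ltnW hi)); ring.
rewrite coefX.
case: n hn => [|[|n]] hn.
- by rewrite big_ord0 mulr0.
- rewrite big_ord1 (_ : 1`! = 1%N) // bin0 invr1 !mul1r; by [].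
- by rewrite bern_sum // mulr0.
Qed.

Lemma cg_trans N (p q r : {poly rat}) : cg N p q -> cg N q r -> cg N p r.
Proof.
rewrite /cg => h1 h2; rewrite (_ : p - r = (p - q) + (q - r)); last by ring.
exact: dvdp_add.
Qed.

Lemma sc_0 c : sc c 0 = 0.
Proof. by apply/polyP => i; rewrite coef_sc !coef0 mulr0. Qed.

Lemma Bsym N : (0 < N)%N ->
  cg N (sc (-1) (Bp N.+1) - Bp N.+1 - 'X) 0.
Proof.
move=> hN.
set B := Bp N.+1; set E1 := Ep N.+1 1; set Em := Ep N.+1 (-1).
set Bm := sc (-1) B.
have h0 : cg N.+1 (B * (E1 - 1)) 'X := B_rec N.+1.
have h1 : cg N.+1 (Bm * (Em - 1)) (- 'X).
  have := sc_cg (-1) _ _ _ h0.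
  by rewrite sc_mul sc_sub sc_E sc_1 sc_X mulr1 polyCN polyC1 mulN1r.
have u : cg N.+1 (Em * E1) 1.
  apply: cg_trans (E_mul _ _ _) _; rewrite addNr; exact: E0.
apply: (@cg_cancel N _ (E1 - 1)).
- rewrite /cg in h0 h1 u *.
  rewrite (_ : _ - 0 = - E1 * (Bm * (Em - 1) - - 'X) + Bm * (Em * E1 - 1)
                        - (B * (E1 - 1) - 'X)); last by ring.
  by apply: dvdp_sub => //; apply: dvdp_add; apply: dvdp_mull.
- by rewrite coefB coef1 coef_poly /= expr0 invr1 mulr1 subrr.
- by rewrite coefB coef1 coef_poly /= ltnS hN expr1 invr1 mulr1 subr0 oner_eq0.
Qed.

Lemma B_odd n : odd n -> (1 < n)%N -> bernoulli n = 0.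
Proof.
move=> hodd hn.
have := @Bsym n.+1 (ltn0Sn n) => /cgP /(_ n (ltnSn n)).
rewrite coef0 !coefB coef_sc coefX coef_poly ltnS leqnSn.
rewrite -signr_odd hodd expr1 (_ : (n == 1)%N = false); last first.
  by apply/negbTE; rewrite neq_ltn hn orbT.
rewrite subr0 => h.
have /eqP : bernoulli n / n`!%:R = 0 by lra.
rewrite mulf_eq0 invr_eq0 pnatr_eq0 -[(n`! == 0)%N]negbK -lt0n fact_gt0 orbF.
by move/eqP.
Qed.

Lemma F_odd m : odd m ->
  \sum_(j < m.+1) ('C(m, j))%:R * 2%:R ^+ j * bernoulli j = 0.
Proof.
move=> hodd.
set B := Bp m.+2; set E1 := Ep m.+2 1; set Em := Ep m.+2 (-1); set E2 := Ep m.+2 2.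
set Bm := sc (-1) B; set D := sc 2 B; set Dm := sc (-1) D.
have hD0 : cg m.+2 (D * (E2 - 1)) (2%:P * 'X).
  have := sc_cg 2 _ _ _ (B_rec m.+2).
  by rewrite sc_mul sc_sub sc_E sc_1 sc_X mulr1.
have E11 : cg m.+2 (E1 * E1) E2 by have := E_mul m.+2 1 1.
have u : cg m.+2 (Em * E1) 1.
  apply: cg_trans (E_mul _ _ _) _; rewrite addNr; exact: E0.
have hs : cg m.+1 (Dm - D - 2%:P * 'X) 0.
  have := sc_cg 2 _ _ _ (@Bsym m.+1 (ltn0Sn m)).
  by rewrite sc_0 !sc_sub sc_X sc_sc mulrC -sc_sc.
have key : cg m.+1 (sc (-1) (D * E1)) (D * E1).
  rewrite sc_mul sc_E mulr1 -/Em -/Dm.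
  move: (cg_le _ _ _ _ (leqnSn m.+1) hD0) (cg_le _ _ _ _ (leqnSn m.+1) E11)
        (cg_le _ _ _ _ (leqnSn m.+1) u) hs.
  rewrite /cg => h1 h2 h3 h4.
  rewrite (_ : Dm * Em - D * E1 = (Dm - D - 2%:P * 'X - 0) * Em
       - Em * (D * (E2 - 1) - 2%:P * 'X) - Em * D * (E1 * E1 - E2)
       + D * E1 * (Em * E1 - 1)); last by ring.
  apply: dvdp_add; last exact: dvdp_mull.
  apply: dvdp_sub; last exact: dvdp_mull.
  apply: dvdp_sub; last exact: dvdp_mull.
  by rewrite mulrC; apply: dvdp_mull.
move/cgP: key => /(_ m (ltnSn m)); rewrite coef_sc -signr_odd hodd expr1.
rewrite coefM.
have -> : \sum_(i < m.+1) D`_i * E1`_(m - i) =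
    (m`!%:R)^-1 * \sum_(j < m.+1) ('C(m, j))%:R * 2%:R ^+ j * bernoulli j.
  rewrite mulr_sumr; apply: eq_bigr => i _.
  have hi : (i <= m)%N by rewrite -ltnS.
  have h1 : (i < m.+2)%N by lia.
  have h2 : (m - i < m.+2)%N by lia.
  rewrite coef_sc !coef_poly h1 h2 expr1n.
  transitivity (2%:R ^+ i * bernoulli i * ((i`!%:R)^-1 * ((m - i)`!%:R)^-1)).
    ring.
  rewrite (fact_bin _ _ hi); ring.
move=> h.
have /eqP : (m`!%:R : rat)^-1 * \sum_(j < m.+1) ('C(m, j))%:R * 2%:R ^+ j * bernoulli j = 0.
  by lra.
rewrite mulf_eq0 invr_eq0 pnatr_eq0 -[(m`! == 0)%N]negbK -lt0n fact_gt0 /=.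
by move/eqP.
Qed.

Lemma sum_pairs (f : nat -> rat) n :
  \sum_(j < (2 * n)%N) f j = \sum_(t < n) (f (2 * t)%N + f (2 * t).+1).
Proof.
elim: n => [|n IH]; first by rewrite !big_ord0.
rewrite (_ : (2 * n.+1 = (2 * n).+2)%N); last by lia.
rewrite !big_ord_recr /= IH addrA.
by [].
Qed.

Lemma bern1 : bernoulli 1 = - (2%:R)^-1.
Proof. by rewrite bern_rec big_ord1 bin0 mul1r /bernoulli /= mulr1. Qed.

Lemma lemA s :
  \sum_(t < s.+1) bernoulli (2 * t) * 2%:R ^+ (2 * t) * ('C((2 * s).+1, 2 * t))%:R
  = (2 * s).+1%:R.
Proof.
have ho : odd (2 * s).+1 by rewrite /= oddM.
have := @F_odd (2 * s).+1 ho.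
rewrite (_ : ((2 * s).+2 = 2 * s.+1)%N); last by lia.
rewrite (sum_pairs (fun j => ('C((2 * s).+1, j))%:R * 2%:R ^+ j * bernoulli j)) big_split /=.
have -> : \sum_(i < s.+1) ('C((2 * s).+1, (2 * i).+1))%:R * 2%:R ^+ (2 * i).+1
            * bernoulli (2 * i).+1 = - (2 * s).+1%:R.
  rewrite big_ord_recl /= muln0 bin1 bern1 expr1.
  rewrite big1 ?addr0; last first.
    move=> i _; rewrite B_odd ?mulr0 //.
      by rewrite oddS oddM.
  have h2 : (2%:R : rat) != 0 by rewrite pnatr_eq0.
  by rewrite -mulrA mulrN divff // mulrN1.
move=> h.
have -> : \sum_(t < s.+1) bernoulli (2 * t) * 2%:R ^+ (2 * t) * ('C((2 * s).+1, 2 * t))%:R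
  = \sum_(i < s.+1) ('C((2 * s).+1, 2 * i))%:R * 2%:R ^+ (2 * i) * bernoulli (2 * i).
  by apply: eq_bigr => i _; ring.
by lra.
Qed.

Lemma trinE k i t : (i + t <= k)%N ->
  trinomial (2 * k + 2) (2 * t) (2 * i + 1) (2 * k - 2 * t - 2 * i + 1) =
  ('C(2 * k + 2, (2 * (i + t)).+1) * 'C((2 * (i + t)).+1, 2 * t))%N.
Proof.
move=> h.
rewrite /trinomial.
have e1 := @bin_fact (2 * k + 2) (2 * (i + t)).+1.
have e2 := @bin_fact (2 * (i + t)).+1 (2 * t).
rewrite -e1; last by lia.
rewrite -e2; last by lia.
rewrite (_ : (2 * (i + t)).+1 - 2 * t = 2 * i + 1)%N; last by lia.
rewrite (_ : 2 * k + 2 - (2 * (i + t)).+1 = 2 * k - 2 * t - 2 * i + 1)%N; last by lia.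
rewrite (_ : ('C(2 * k + 2, (2 * (i + t)).+1) *
   ('C((2 * (i + t)).+1, 2 * t) * ((2 * t)`! * (2 * i + 1)`!) *
    (2 * k - 2 * t - 2 * i + 1)`!) =
   'C(2 * k + 2, (2 * (i + t)).+1) * 'C((2 * (i + t)).+1, 2 * t) *
   ((2 * t)`! * (2 * i + 1)`! * (2 * k - 2 * t - 2 * i + 1)`!))%N); last first.
  by rewrite !mulnA.
by rewrite mulnK // !muln_gt0 !fact_gt0.
Qed.

Lemma reidx (K : nat) (P : pred nat) (h : nat -> nat -> rat) :
  (forall s, P s -> (s <= K)%N) ->
  \sum_(i < K.+1) \sum_(t < K.+1 | P (i + t)%N) h (i + t)%N t =
  \sum_(s < K.+1 | P s) \sum_(t < s.+1) h s t.
Proof.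
move=> hP.
under eq_bigr => i _ do rewrite big_mkcond /=.
rewrite exchange_big /=.
rewrite big_mkcond /=.
under [RHS]eq_bigr => s _ do rewrite (big_ord_widen K.+1 (h s)) // big_mkcond /=.
rewrite [RHS]exchange_big /=.
apply: eq_bigr => t _.
have ht := ltn_ord t.
rewrite -(big_mkord xpredT (fun i => if P (i + t)%N then h (i + t)%N t else 0)).
rewrite [RHS]big_mkcond /=.
rewrite -(big_mkord xpredT (fun s => if P s then (if (t < s.+1)%N then h s t else 0) else 0)).
rewrite [RHS](big_cat_nat (_ : (0 <= t)%N) (_ : (t <= K.+1)%N)) //=; last by lia.
rewrite [X in _ = X + _]big_nat_cond [X in _ = X + _]big1 ?add0r; last first.
  by move=> s /andP[/andP[_ hs] _]; case: (P s) => //; rewrite ltnS leqNgt hs.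
rewrite -[in RHS](add0n t) big_addn.
rewrite [LHS](big_cat_nat (_ : (0 <= K.+1 - t)%N) (_ : (K.+1 - t <= K.+1)%N)) //=; last by lia.
rewrite [X in _ + X = _]big_nat_cond [X in _ + X = _]big1 ?addr0; last first.
  move=> i /andP[/andP[hi1 hi2] _]; case hp: (P (i + t)%N) => //.
  have := hP _ hp; lia.
apply: eq_bigr => i _; case: (P (i + t)%N) => //.
by rewrite ltnS leq_addl.
Qed.

Lemma total_bin n : \sum_(j < n.+1) ('C(n, j))%:R = 2%:R ^+ n :> rat.
Proof.
rewrite (_ : 2%:R = 1 + 1 :> rat) // exprDn; apply: eq_bigr => j _.
by rewrite !expr1n mulr1.
Qed.

Lemma sym_bin k :
  \sum_(j < (2 * k).+1) (if (j < k)%N then ('C(2 * k, j))%:R else 0 : rat) =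
  \sum_(j < (2 * k).+1) (if (k < j)%N then ('C(2 * k, j))%:R else 0).
Proof.
rewrite (reindex_inj (@rev_ord_inj _)) /=; apply: eq_bigr => j _.
have hj := ltn_ord j.
rewrite subSS bin_sub; last by lia.
have -> : (2 * k - j < k)%N = (k < j)%N by lia.
by [].
Qed.

Lemma half_bin k :
  2%:R * \sum_(j < (2 * k).+1) (if (k < j)%N then ('C(2 * k, j))%:R else 0 : rat)
  = 2%:R ^+ (2 * k) - ('C(2 * k, k))%:R.
Proof.
rewrite -total_bin mulr2n.
have -> : \sum_(j < (2 * k).+1) ('C(2 * k, j))%:R =
   \sum_(j < (2 * k).+1) (if (j < k)%N then ('C(2 * k, j))%:R else 0 : rat)
 + \sum_(j < (2 * k).+1) (if (j == k :> nat) then ('C(2 * k, j))%:R else 0 : rat)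
 + \sum_(j < (2 * k).+1) (if (k < j)%N then ('C(2 * k, j))%:R else 0 : rat).
  rewrite -!big_split /=; apply: eq_bigr => j _.
  by case: (ltngtP j k) => _; rewrite ?addr0 ?add0r.
rewrite sym_bin.
have -> : \sum_(j < (2 * k).+1) (if (j == k :> nat) then ('C(2 * k, j))%:R else 0 : rat)
   = ('C(2 * k, k))%:R.
  have hk : (k < (2 * k).+1)%N by lia.
  rewrite (bigD1 (Ordinal hk)) //= eqxx big1 ?addr0 // => j hj.
  case: eqP => // ej; move: hj; suff -> : j = Ordinal hk by rewrite eqxx.
  by apply: val_inj.
ring.
Qed.

Lemma c4 k :
  \sum_(s < k.+1 | (k./2 < s <= k)%N) ('C((2 * k).+1, 2 * s))%:R =
  \sum_(j < (2 * k).+1) (if (2 * k./2 < j)%N then ('C(2 * k, j))%:R else 0 : rat).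
Proof.
rewrite (big_ord_recl (2 * k)) /= add0r.
under [RHS]eq_bigr => i _ do rewrite /bump /= add1n.
rewrite (sum_pairs (fun j => (if (2 * k./2 < j.+1)%N then ('C(2 * k, j.+1))%:R else 0 : rat))).
rewrite big_mkcond big_ord_recl /= add0r.
apply: eq_bigr => s _; rewrite /bump /= add1n.
have hs := ltn_ord s.
rewrite (_ : (s.+1 <= k)%N = true); last by lia.
rewrite andbT (_ : (2 * s.+1 = (2 * s).+1.+1)%N); last by lia.
rewrite binS natrD.
have -> : (k./2 < s.+1)%N = (2 * k./2 < (2 * s).+1)%N by lia.
have -> : (2 * k./2 < (2 * s).+2)%N = (2 * k./2 < (2 * s).+1)%N by lia.
case: ifP => _; last by rewrite addr0.
by rewrite addrC.
Qed.

Lemma mid_bin k :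
  \sum_(j < (2 * k).+1) (if (j == k :> nat) then ('C(2 * k, j))%:R else 0 : rat)
   = ('C(2 * k, k))%:R.
Proof.
have hk : (k < (2 * k).+1)%N by lia.
rewrite (bigD1 (Ordinal hk)) //= eqxx big1 ?addr0 // => j hj.
case: eqP => // ej; move: hj; suff -> : j = Ordinal hk by rewrite eqxx.
by apply: val_inj.
Qed.

Lemma comb k :
  2%:R * \sum_(s < k.+1 | (k./2 < s <= k)%N) ('C((2 * k).+1, 2 * s))%:R =
  2%:R ^+ (2 * k) - (-1) ^+ k * ('C(2 * k, k))%:R :> rat.
Proof.
rewrite c4 -signr_odd.
have hk := odd_double_half k.
case ho: (odd k).
- have -> : \sum_(j < (2 * k).+1)
      (if (2 * k./2 < j)%N then ('C(2 * k, j))%:R else 0 : rat) =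
    \sum_(j < (2 * k).+1) (if (k < j)%N then ('C(2 * k, j))%:R else 0 : rat)
    + \sum_(j < (2 * k).+1) (if (j == k :> nat) then ('C(2 * k, j))%:R else 0 : rat).
    rewrite -big_split /=; apply: eq_bigr => j _.
    move: hk; rewrite ho /= -muln2 => hk.
    case: (ltngtP j k) => hjk.
    + by rewrite (_ : (2 * k./2 < j)%N = false) ?addr0 //; lia.
    + by rewrite (_ : (2 * k./2 < j)%N = true) ?addr0 //; lia.
    + by rewrite (_ : (2 * k./2 < j)%N = true) ?add0r // hjk; lia.
  rewrite mulrDr half_bin mid_bin expr1; ring.
- have -> : (2 * k./2 = k)%N by move: hk; rewrite ho /= add0n -muln2; lia.
  by rewrite half_bin expr0 mul1r.
Qed.

Theorem mainTheorem4 (k : nat) (hk : (0 < k)%N) :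
  \sum_(i < k.+1) \sum_(t < k.+1 | (k./2 < i + t <= k)%N)
     bernoulli (2 * t) * 2%:R ^+ (2 * t) *
     (trinomial (2 * k + 2) (2 * t) (2 * i + 1) (2 * k - 2 * t - 2 * i + 1))%:R
  = k.+1%:R * (2%:R ^+ (2 * k) - (-1) ^+ k * ('C(2 * k, k))%:R).
Proof.
set h := fun s t => ('C(2 * k + 2, (2 * s).+1))%:R *
   (bernoulli (2 * t) * 2%:R ^+ (2 * t) * ('C((2 * s).+1, 2 * t))%:R) : rat.
transitivity (\sum_(i < k.+1) \sum_(t < k.+1 | (k./2 < i + t <= k)%N) h (i + t)%N t).
  apply: eq_bigr => i _; apply: eq_bigr => t /andP[_ ht].
  by rewrite trinE // natrM /h; ring.
rewrite (@reidx k (fun s => (k./2 < s <= k)%N) h); last by move=> s /andP[].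
transitivity (\sum_(s < k.+1 | (k./2 < s <= k)%N) (2 * k + 2)%:R * ('C((2 * k).+1, 2 * s))%:R : rat).
  apply: eq_bigr => s _; rewrite /h -mulr_sumr lemA -natrM mulnC.
  rewrite -mul_bin_diag natrM (_ : (2 * k + 2).-1 = (2 * k).+1)%N //; lia.
rewrite -mulr_sumr -comb (_ : (2 * k + 2 = 2 * k.+1)%N); last by lia.
rewrite natrM; ring.
Qed.
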